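(* Let $\mathcal{M}\subseteq\mathbb{S}^n$ with $|\mathcal{M}|=2$. Then $\mathcal{S}(\mathcal{M})$ is rank-one generated if and only if $\mathcal{T}(\mathcal{M})$ is rank-one generated.
   Context: $\mathbb{S}^n$ denotes real symmetric $n\times n$ matrices with $\langle A,B\rangle=\mathrm{tr}(AB)$, $\mathbb{S}^n_+$ the PSD cone. For $\mathcal{M}\subseteq\mathbb{S}^n$, $\mathcal{S}(\mathcal{M})=\{X\in\mathbb{S}^n_+:\langle M,X\rangle\ge0\ \forall M\in\mathcal{M}\}$ and $\mathcal{T}(\mathcal{M})=\{X\in\mathbb{S}^n_+:\langle M,X\rangle=0\ \forall M\in\mathcal{M}\}$. A closed convex cone $\mathcal{S}\subseteq\mathbb{S}^n_+$ is rank-one generated (ROG) if $\mathcal{S}=\mathrm{conv}(\mathcal{S}\cap\{xx^\top:x\in\mathbb{R}^n\})$. *)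

(* Defs.v *)
From HB Require Import structures.
From mathcomp Require Import all_boot all_order all_algebra.
From mathcomp Require Import reals.
Set Implicit Arguments. Unset Strict Implicit. Unset Printing Implicit Defensive.
Import Order.TTheory GRing.Theory Num.Theory.
Local Open Scope ring_scope.

Section Defs.
Variables (R : realType) (n : nat).

Definition symmx (X : 'M[R]_n) : Prop := X^T = X.

Definition mxinner (A B : 'M[R]_n) : R := \tr (A *m B).

Definition psdmx (X : 'M[R]_n) : Prop :=
  symmx X /\ forall x : 'cV[R]_n, 0 <= (x^T *m X *m x) ord0 ord0.

Definition Scone (calM : 'M[R]_n -> Prop) (X : 'M[R]_n) : Prop :=
  psdmx X /\ forall M, calM M -> 0 <= mxinner M X.

Definition Tcone (calM : 'M[R]_n -> Prop) (X : 'M[R]_n) : Prop :=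
  psdmx X /\ forall M, calM M -> mxinner M X = 0.

(* rank-one matrices x x^T (x arbitrary, possibly 0) *)
Definition rank_one_psd (X : 'M[R]_n) : Prop :=
  exists x : 'cV[R]_n, X = x *m x^T.

Definition convex_hull (K : 'M[R]_n -> Prop) (X : 'M[R]_n) : Prop :=
  exists (k : nat) (lam : 'I_k -> R) (Y : 'I_k -> 'M[R]_n),
    (forall i, 0 <= lam i) /\ \sum_(i < k) lam i = 1 /\
    (forall i, K (Y i)) /\ X = \sum_(i < k) lam i *: Y i.

Definition ROG (S : 'M[R]_n -> Prop) : Prop :=
  forall X, S X <-> convex_hull (fun Y => S Y /\ rank_one_psd Y) X.

End Defs.

(* Main.v *)
Require Import Defs.
From HB Require Import structures.
From mathcomp Require Import all_boot all_order all_algebra.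
From mathcomp Require Import reals ring lra.
Import Order.TTheory GRing.Theory Num.Theory.
Local Open Scope ring_scope.
Set Implicit Arguments. Unset Strict Implicit. Unset Printing Implicit Defensive.

Section Aux.
Variables (R : realType) (n : nat).
Implicit Types (M X A B : 'M[R]_n) (x y u v : 'cV[R]_n).

Definition bil M x y : R := (x^T *m M *m y) 0 0.

Lemma inner_rank1 M x y : mxinner M (x *m y^T) = bil M y x.
Proof.
by rewrite /mxinner /bil mulmxA mxtrace_mulC mulmxA trace_mx11.
Qed.

Lemma innerD M A B : mxinner M (A + B) = mxinner M A + mxinner M B.
Proof. by rewrite /mxinner mulmxDr mxtraceD. Qed.

Lemma innerZ M a A : mxinner M (a *: A) = a * mxinner M A.
Proof. by rewrite /mxinner -scalemxAr mxtraceZ. Qed.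

Lemma inner0 M : mxinner M 0 = 0.
Proof. by rewrite /mxinner mulmx0 raddf0. Qed.

Lemma innerB M A B : mxinner M (A - B) = mxinner M A - mxinner M B.
Proof. by rewrite /mxinner mulmxBr raddfB. Qed.

Lemma entry11_tr (x y : 'cV[R]_n) : (x^T *m y) 0 0 = (y^T *m x) 0 0.
Proof.
have -> : y^T *m x = (x^T *m y)^T by rewrite trmx_mul trmxK.
by rewrite [in RHS]mxE.
Qed.

Lemma bil_rank1 x y u w : bil (u *m w^T) x y = (x^T *m u) 0 0 * (w^T *m y) 0 0.
Proof.
rewrite /bil !mulmxA -(mulmxA (x^T *m u)) mxE big_ord1 //.
Qed.

Lemma bilD M N x y : bil (M + N) x y = bil M x y + bil N x y.
Proof. by rewrite /bil mulmxDr mulmxDl [in LHS]mxE. Qed.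

Lemma bilZ a M x y : bil (a *: M) x y = a * bil M x y.
Proof. by rewrite /bil -scalemxAr -scalemxAl [in LHS]mxE. Qed.

Lemma bilB M N x y : bil (M - N) x y = bil M x y - bil N x y.
Proof. by rewrite -scaleN1r bilD bilZ mulN1r. Qed.

Lemma bil0 x y : bil 0 x y = 0.
Proof. by rewrite /bil mulmx0 mul0mx [in LHS]mxE. Qed.

Definition gram (s : seq 'cV[R]_n) : 'M[R]_n := \sum_(w <- s) w *m w^T.

Lemma gram_cons w s : gram (w :: s) = w *m w^T + gram s.
Proof. by rewrite /gram big_cons. Qed.

Lemma gram_cat s1 s2 : gram (s1 ++ s2) = gram s1 + gram s2.
Proof. by rewrite /gram big_cat. Qed.

Lemma psd_rank1 x : psdmx (x *m x^T).
Proof.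
split; first by rewrite /symmx trmx_mul trmxK.
move=> y; have := bil_rank1 y y x x; rewrite /bil => ->.
by rewrite entry11_tr -expr2 sqr_ge0.
Qed.

Lemma psdD A B : psdmx A -> psdmx B -> psdmx (A + B).
Proof.
move=> [sA pA] [sB pB]; split; first by rewrite /symmx raddfD /= sA sB.
move=> y; have := bilD A B y y; rewrite /bil => ->.
by apply: addr_ge0.
Qed.

Lemma psdZ a A : 0 <= a -> psdmx A -> psdmx (a *: A).
Proof.
move=> ha [sA pA]; split; first by rewrite /symmx linearZ /= sA.
move=> y; have := bilZ a A y y; rewrite /bil => ->.
by apply: mulr_ge0.
Qed.

Lemma psd0 : psdmx (0 : 'M[R]_n).
Proof.
split; first by rewrite /symmx trmx0.
by move=> y; have := bil0 y y; rewrite /bil => ->.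
Qed.

Lemma psd_gram s : psdmx (gram s).
Proof.
elim: s => [|w s IH]; first by rewrite /gram big_nil; exact: psd0.
by rewrite gram_cons; apply: psdD => //; apply: psd_rank1.
Qed.

End Aux.
Section Chol.
Variables (R : realType) (n : nat).
Implicit Types (M X A B : 'M[R]_n) (x y u v : 'cV[R]_n).

Lemma bilDl X x1 x2 y : bil X (x1 + x2) y = bil X x1 y + bil X x2 y.
Proof. by rewrite /bil raddfD /= !mulmxDl [in LHS]mxE. Qed.
Lemma bilZl X a x y : bil X (a *: x) y = a * bil X x y.
Proof. by rewrite /bil linearZ /= -!scalemxAl [in LHS]mxE. Qed.
Lemma bilDr X x y1 y2 : bil X x (y1 + y2) = bil X x y1 + bil X x y2.
Proof. by rewrite /bil !mulmxDr [in LHS]mxE. Qed.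
Lemma bilZr X a x y : bil X x (a *: y) = a * bil X x y.
Proof. by rewrite /bil -!scalemxAr [in LHS]mxE. Qed.

Lemma bil_sym X x y : symmx X -> bil X x y = bil X y x.
Proof.
move=> sX; rewrite /bil.
have -> : y^T *m X *m x = (x^T *m X *m y)^T by rewrite !trmx_mul trmxK sX mulmxA.
by rewrite [in RHS]mxE.
Qed.

Lemma bil_shift X x y t :
  bil X (x + t *: y) (x + t *: y) =
  bil X x x + t * (bil X x y + bil X y x) + t ^+ 2 * bil X y y.
Proof. rewrite !bilDl !bilDr !bilZl !bilZr; ring. Qed.

Lemma bil_delta X (i j : 'I_n) : bil X (delta_mx i 0) (delta_mx j 0) = X i j.
Proof. by rewrite /bil trmx_delta -rowE -colE !mxE. Qed.

Lemma outer_entry x y (i j : 'I_n) : (x *m y^T) i j = x i 0 * y j 0.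
Proof. by rewrite !mxE big_ord1 mxE. Qed.

Lemma psd_diag_ge0 X (k : 'I_n) : psdmx X -> 0 <= X k k.
Proof. by move=> [_ pX]; rewrite -bil_delta; apply: pX. Qed.

Lemma psd_offdiag0 X (k j : 'I_n) : psdmx X -> X k k = 0 -> X k j = 0.
Proof.
move=> [sX pX] hk.
have key : forall t, 0 <= X j j + 2 * t * X k j.
  move=> t; have := pX (delta_mx j 0 + t *: delta_mx k 0).
  rewrite -/(bil _ _ _) bil_shift (bil_sym _ _ sX) !bil_delta hk.
  by move=> h; lra.
apply/eqP; apply/negP => /negP hb.
have := key (- (X j j + 1) / (2 * X k j)).
have -> : X j j + 2 * (- (X j j + 1) / (2 * X k j)) * X k j = -1 by field; rewrite hb.
lra.
Qed.

Lemma chol_aux d : forall X, psdmx X ->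
  (forall i j : 'I_n, (i < n - d)%N -> X i j = 0) -> exists s, X = gram s.
Proof.
elim: d => [|d IH] X pX H.
  exists [::]; rewrite /gram big_nil; apply/matrixP => i j.
  by rewrite mxE H // subn0 ltn_ord.
case: (leqP n d) => hd.
  apply: IH => // i j; have : (n - d = 0)%N by apply/eqP; rewrite subn_eq0.
  by move=> ->.
have hm : (n - d.+1 < n)%N by rewrite -subSn // subSS leq_subr.
set k : 'I_n := Ordinal hm.
have hnd : (n - d = (n - d.+1).+1)%N by rewrite -subSn.
have Hk : forall i : 'I_n, (i < n - d)%N -> (i < n - d.+1)%N \/ i = k.
  move=> i; rewrite hnd ltnS leq_eqVlt => /orP [/eqP e|l]; last by left.
  by right; apply: val_inj.
have [sX qX] := pX.
have ha := psd_diag_ge0 k pX.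
case: (ltrgt0P (X k k)) ha => // ha _; last first.
  apply: IH => // i j /Hk [/H -> //| ->].
  by apply: psd_offdiag0.
set c := (Num.sqrt (X k k))^-1.
set w := c *: col k X.
have hc : c ^+ 2 * X k k = 1.
  rewrite /c exprVn sqr_sqrtr ?mulVf //; [by rewrite gt_eqF | by rewrite ltW].
have wE : forall i, w i 0 = c * X i k by move=> i; rewrite !mxE.
have XkE : forall j, X j k = X k j by move=> j; rewrite -{1}sX mxE.
have [s Hs] : exists s, X - w *m w^T = gram s.
  apply: IH.
    split.
      by rewrite /symmx raddfB /= sX trmx_mul trmxK.
    move=> x; rewrite -/(bil _ _ _) bilB bil_rank1 entry11_tr.
    have -> : (w^T *m x) 0 0 = c * bil X (delta_mx k 0) x.
      rewrite /w linearZ /= -scalemxAl mxE colE trmx_mul sX trmx_delta.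
      by rewrite /bil trmx_delta.
    have := qX (x + (- bil X (delta_mx k 0) x / X k k) *: delta_mx k 0).
    rewrite -/(bil _ _ _) bil_shift (bil_sym x _ sX) bil_delta.
    set b := bil X (delta_mx k 0) x.
    set q := bil X x x.
    have -> : q + - b / X k k * (b + b) + (- b / X k k) ^+ 2 * X k k
            = q - b ^+ 2 / X k k by field; rewrite gt_eqF.
    have -> : q - c * b * (c * b) = q - b ^+ 2 * (c ^+ 2 * X k k) / X k k.
      by field; rewrite gt_eqF.
    by rewrite hc mulr1.
  move=> i j /Hk [hi|->].
    by rewrite !mxE big_ord1 !mxE (H i j hi) (H i k hi) mulr0 mul0r subr0.
  rewrite [_ k j]mxE [X in _ + X]mxE outer_entry !wE XkE.
  have -> : c * X k k * (c * X k j) = (c ^+ 2 * X k k) * X k j by ring.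
  by rewrite hc mul1r subrr.
exists (w :: s); rewrite gram_cons -Hs addrC subrK //.
Qed.

Lemma chol X : psdmx X -> exists s, X = gram s.
Proof.
move=> pX; apply: (chol_aux (d := n)) => // i j.
by rewrite subnn.
Qed.

End Chol.

Section Main.
Variables (R : realType) (n : nat) (M1 M2 : 'M[R]_n).
Implicit Types (X Y D : 'M[R]_n) (x y u v w : 'cV[R]_n).

Definition SS X := psdmx X /\ 0 <= mxinner M1 X /\ 0 <= mxinner M2 X.
Definition TT X := psdmx X /\ mxinner M1 X = 0 /\ mxinner M2 X = 0.
Definition Gen X := exists s, X = gram s /\ forall w, w \in s -> SS (w *m w^T).

Lemma inner_sum M k (F : 'I_k -> 'M[R]_n) :
  mxinner M (\sum_(i < k) F i) = \sum_(i < k) mxinner M (F i).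
Proof. exact: (big_morph (mxinner M) (innerD M) (inner0 M)). Qed.

Lemma TT_SS X : TT X -> SS X.
Proof. by move=> [p [h1 h2]]; split => //; rewrite h1 h2. Qed.

Lemma SS0 : SS 0.
Proof. by split; [exact: psd0 | rewrite !inner0]. Qed.
Lemma TT0 : TT 0.
Proof. by split; [exact: psd0 | rewrite !inner0]. Qed.

Lemma SSD X Y : SS X -> SS Y -> SS (X + Y).
Proof.
move=> [pX [a1 a2]] [pY [b1 b2]]; split; first exact: psdD.
by rewrite !innerD; split; apply: addr_ge0.
Qed.
Lemma TTD X Y : TT X -> TT Y -> TT (X + Y).
Proof.
move=> [pX [a1 a2]] [pY [b1 b2]]; split; first exact: psdD.
by rewrite !innerD a1 a2 b1 b2 addr0.
Qed.
Lemma SSZ a X : 0 <= a -> SS X -> SS (a *: X).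
Proof.
move=> ha [pX [a1 a2]]; split; first exact: psdZ.
by rewrite !innerZ; split; apply: mulr_ge0.
Qed.
Lemma TTZ a X : 0 <= a -> TT X -> TT (a *: X).
Proof.
move=> ha [pX [a1 a2]]; split; first exact: psdZ.
by rewrite !innerZ a1 a2 mulr0.
Qed.

Lemma SS_hull X : convex_hull (fun Y => SS Y /\ rank_one_psd Y) X -> SS X.
Proof.
move=> [k [lam [Y [hl [_ [hY ->]]]]]].
apply: (big_ind SS) => //; [exact: SS0 | exact: SSD |].
by move=> i _; apply: SSZ => //; case: (hY i).
Qed.
Lemma TT_hull X : convex_hull (fun Y => TT Y /\ rank_one_psd Y) X -> TT X.
Proof.
move=> [k [lam [Y [hl [_ [hY ->]]]]]].
apply: (big_ind TT) => //; [exact: TT0 | exact: TTD |].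
by move=> i _; apply: TTZ => //; case: (hY i).
Qed.

Lemma scale_outer a w : (a *: w) *m (a *: w)^T = a ^+ 2 *: (w *m w^T).
Proof. by rewrite linearZ /= -scalemxAl -scalemxAr scalerA -expr2. Qed.

Lemma Gen0 : Gen 0.
Proof. by exists [::]; split => //; rewrite /gram big_nil. Qed.

Lemma GenD X Y : Gen X -> Gen Y -> Gen (X + Y).
Proof.
move=> [s1 [-> h1]] [s2 [-> h2]]; exists (s1 ++ s2); split; first by rewrite gram_cat.
by move=> w; rewrite mem_cat => /orP [/h1|/h2].
Qed.

Lemma GenZ a X : 0 <= a -> Gen X -> Gen (a *: X).
Proof.
move=> ha [s [-> h]]; exists (map (fun w => Num.sqrt a *: w) s); split.
  rewrite /gram big_map scaler_sumr; apply: eq_bigr => w _.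
  by rewrite scale_outer sqr_sqrtr.
move=> w' /mapP [w ws ->]; rewrite scale_outer sqr_sqrtr //.
by apply: SSZ => //; apply: h.
Qed.

Lemma Gen_sum k (F : 'I_k -> 'M[R]_n) : (forall i, Gen (F i)) -> Gen (\sum_(i < k) F i).
Proof. by move=> h; apply: (big_ind Gen) => //; [exact: Gen0 | exact: GenD]. Qed.

Lemma gram1 w : gram [:: w] = w *m w^T.
Proof. by rewrite gram_cons /gram big_nil addr0. Qed.

Lemma Gen_of_hull X : convex_hull (fun Y => TT Y /\ rank_one_psd Y) X -> Gen X.
Proof.
move=> [k [lam [Y [hl [_ [hY ->]]]]]].
apply: Gen_sum => i; apply: GenZ => //.
have [hT [y hy]] := hY i.
exists [:: y]; split; first by rewrite gram1.
by move=> w; rewrite inE => /eqP ->; rewrite -hy; apply: TT_SS.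
Qed.

Lemma hull_of_Gen X : Gen X -> convex_hull (fun Y => SS Y /\ rank_one_psd Y) X.
Proof.
move=> [s [-> h]].
case: s h => [|w0 s0] h.
  exists 1%N, (fun _ => 1), (fun _ => 0); split => //; split; first by rewrite big_ord1.
  split; first by move=> _; split; [exact: SS0 | exists 0; rewrite mul0mx].
  by rewrite big_ord1 scaler0 /gram big_nil.
set s := w0 :: s0.
have hm : (0 < size s)%N by [].
have hm' : (size s)%:R != 0 :> R by rewrite pnatr_eq0 -lt0n.
exists (size s), (fun _ => (size s)%:R^-1),
  (fun i => (size s)%:R *: (nth 0 s i *m (nth 0 s i)^T)).
split; first by move=> i; rewrite invr_ge0 ler0n.
split; first by rewrite sumr_const card_ord -[_ *+ size s]mulr_natr mulVf.
split.
  move=> i; split.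
    by apply: SSZ; [rewrite ler0n | apply: h; apply: mem_nth].
  exists (Num.sqrt (size s)%:R *: nth 0 s i); rewrite scale_outer sqr_sqrtr //.
rewrite /gram (big_nth 0) big_mkord; apply: eq_bigr => i _.
by rewrite scalerA mulVf // scale1r.
Qed.


Lemma kernel3 (x1 y1 z1 x2 y2 z2 : R) : exists p q s,
  ~ (p = 0 /\ q = 0 /\ s = 0) /\ x1 * p + y1 * q + z1 * s = 0 /\
  x2 * p + y2 * q + z2 * s = 0.
Proof.
pose c1 := y1 * z2 - z1 * y2; pose c2 := z1 * x2 - x1 * z2;
pose c3 := x1 * y2 - y1 * x2.
have [h1|h1] := eqVneq c1 0; last first.
  exists c1, c2, c3; split; first by case=> /eqP; rewrite (negbTE h1).
  by split; rewrite /c1 /c2 /c3; ring.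
have [h2|h2] := eqVneq c2 0; last first.
  exists c1, c2, c3; split; first by case=> _ [] /eqP; rewrite (negbTE h2).
  by split; rewrite /c1 /c2 /c3; ring.
have [h3|h3] := eqVneq c3 0; last first.
  exists c1, c2, c3; split; first by case=> _ [] _ /eqP; rewrite (negbTE h3).
  by split; rewrite /c1 /c2 /c3; ring.
move: h1 h2 h3; rewrite /c1 /c2 /c3 => h1 h2 h3.
have [hx|hx] := eqVneq x1 0; have [hy|hy] := eqVneq y1 0.
- have [hz|hz] := eqVneq z1 0.
  + have [hx2|hx2] := eqVneq x2 0; have [hy2|hy2] := eqVneq y2 0.
    * have [hz2|hz2] := eqVneq z2 0.
        exists 1, 0, 0; split; first by case=> /eqP; rewrite oner_eq0.
        by rewrite hx hy hz hx2 hy2 hz2; split; ring.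
      exists z2, 0, (- x2); split; first by case=> /eqP; rewrite (negbTE hz2).
      by rewrite hx hy hz hx2; split; ring.
    * exists y2, (- x2), 0; split; first by case=> /eqP; rewrite (negbTE hy2).
      by rewrite hx hy hz; split; ring.
    * exists y2, (- x2), 0; split; first by case=> _ [] /eqP; rewrite oppr_eq0 (negbTE hx2).
      by rewrite hx hy hz; split; ring.
    * exists y2, (- x2), 0; split; first by case=> /eqP; rewrite (negbTE hy2).
      by rewrite hx hy hz; split; ring.
  + exists z1, 0, (- x1); split; first by case=> /eqP; rewrite (negbTE hz).
    split; first ring. lra.
- exists y1, (- x1), 0; split; first by case=> /eqP; rewrite (negbTE hy).
  split; first ring. lra.
- exists y1, (- x1), 0; split; first by case=> _ [] /eqP; rewrite oppr_eq0 (negbTE hx).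
  split; first ring. lra.
- exists y1, (- x1), 0; split; first by case=> /eqP; rewrite (negbTE hy).
  split; first ring. lra.
Qed.

Definition Phi u v (a b c : R) : 'M[R]_n :=
  a *: (u *m u^T) + b *: (u *m v^T + v *m u^T) + c *: (v *m v^T).

Lemma Phi_entry u v a b c i j : Phi u v a b c i j =
  a * (u i 0 * u j 0) + b * (u i 0 * v j 0 + v i 0 * u j 0) + c * (v i 0 * v j 0).
Proof. by rewrite /Phi !mxE !big_ord1 !mxE. Qed.

Lemma inner_Phi M u v a b c : mxinner M (Phi u v a b c) =
  a * bil M u u + b * (bil M v u + bil M u v) + c * bil M v v.
Proof. by rewrite /Phi !innerD !innerZ !innerD !inner_rank1. Qed.

Lemma Phi_rank1 u v a b c : 0 <= a -> 0 <= c -> a * c = b ^+ 2 ->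
  exists w, Phi u v a b c = w *m w^T.
Proof.
move=> ha hc habc.
case: (ltrgt0P a) ha => // ha _.
  set sa := Num.sqrt a.
  have hsa : 0 < sa by rewrite sqrtr_gt0.
  have hsa2 : sa ^+ 2 = a by rewrite sqr_sqrtr // ltW.
  have hc' : c = b ^+ 2 / sa ^+ 2 by rewrite hsa2 -habc; field; rewrite gt_eqF.
  exists (sa *: u + (b / sa) *: v); apply/matrixP => i j.
  rewrite Phi_entry outer_entry !mxE hc' -hsa2.
  by field; rewrite gt_eqF.
have hb : b = 0 by apply/eqP; rewrite -sqrf_eq0 -habc ha mul0r.
exists (Num.sqrt c *: v); apply/matrixP => i j.
rewrite Phi_entry outer_entry !mxE ha hb.
rewrite -[c in LHS](sqr_sqrtr hc); ring.
Qed.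

Lemma Phi_psd u v a b c : 0 <= a -> 0 <= c -> b ^+ 2 <= a * c ->
  psdmx (Phi u v a b c).
Proof.
move=> ha hc habc.
case: (ltrgt0P a) ha => // ha _.
  have -> : Phi u v a b c = Phi u v a b (b ^+ 2 / a) + Phi u v 0 0 (c - b ^+ 2 / a).
    by apply/matrixP => i j; rewrite [in RHS]mxE !Phi_entry; field; rewrite gt_eqF.
  apply: psdD.
    have h1 : 0 <= b ^+ 2 / a by apply: divr_ge0; [apply: sqr_ge0 | apply: ltW].
    have h2 : a * (b ^+ 2 / a) = b ^+ 2 by rewrite mulrC mulfVK // gt_eqF.
    have [w ->] := Phi_rank1 u v (ltW ha) h1 h2.
    exact: psd_rank1.
  have h1 : 0 <= c - b ^+ 2 / a by rewrite subr_ge0 ler_pdivrMr // mulrC.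
  have h2 : 0 * (c - b ^+ 2 / a) = 0 ^+ 2 by rewrite mul0r expr0n.
  have [w ->] := Phi_rank1 u v (lexx 0) h1 h2.
  exact: psd_rank1.
have hb : b = 0.
  by apply/eqP; rewrite -sqrf_eq0 eq_le sqr_ge0 andbT; move: habc; rewrite ha mul0r.
have h1 : 0 <= a by rewrite ha.
have h2 : a * c = b ^+ 2 by rewrite ha hb mul0r expr0n.
have [w ->] := Phi_rank1 u v h1 hc h2.
exact: psd_rank1.
Qed.


Lemma Y_id u v r t p q s :
  gram [:: u, v & r] + t *: Phi u v p q s =
  Phi u v (1 + t * p) (t * q) (1 + t * s) + gram r.
Proof.
apply/matrixP => i j; rewrite !gram_cons !mxE ?Phi_entry ?mxE ?big_ord1 ?mxE.
ring.
Qed.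

Lemma comb_id X D l t1 t2 : l * t1 + (1 - l) * t2 = 0 ->
  l *: (X + t1 *: D) + (1 - l) *: (X + t2 *: D) = X.
Proof.
move=> h; apply/matrixP => i j; rewrite !mxE.
transitivity (X i j + (l * t1 + (1 - l) * t2) * D i j); first ring.
by rewrite h mul0r addr0.
Qed.

Lemma inner_gram2 M u v r :
  mxinner M (gram [:: u, v & r]) = bil M u u + bil M v v + mxinner M (gram r).
Proof. by rewrite !gram_cons !innerD !inner_rank1 addrA. Qed.

Lemma rank1_cond (p q s r0 l : R) :
  r0 ^+ 2 = (p - s) ^+ 2 + 4 * q ^+ 2 -> (l = p + s + r0 \/ l = p + s - r0) ->
  l != 0 ->
  (1 + (-2 / l) * p) * (1 + (-2 / l) * s) = ((-2 / l) * q) ^+ 2.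
Proof.
move=> hr hl l0.
have e : (1 + (-2 / l) * p) * (1 + (-2 / l) * s) - ((-2 / l) * q) ^+ 2
   = ((l - 2 * p) * (l - 2 * s) - 4 * q ^+ 2) / l ^+ 2 by field.
have : (l - 2 * p) * (l - 2 * s) - 4 * q ^+ 2 = 0.
  by case: hl => ->; rewrite -[4 * _](addKr ((p - s) ^+ 2)) -hr; ring.
by move=> h0; apply/eqP; rewrite -subr_eq0 e h0 mul0r.
Qed.

Lemma main_gen (hT : forall X, TT X -> Gen X) k :
  forall s, (size s <= k)%N -> SS (gram s) -> Gen (gram s).
Proof.
elim: k => [|k IH] s.
  by case: s => // _ _; exists [::].
case: s => [|u [|v r]] hs hS.
- by exists [::].
- exists [:: u]; split => //; move=> w; rewrite inE => /eqP ->.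
  by rewrite -gram1.
have hr : (size r < k)%N by move: hs => /=; rewrite !ltnS.
set X := gram [:: u, v & r].
have [pX [hX1 hX2]] := hS.
have [p [q [s' [hnz [e1 e2]]]]] :=
  kernel3 (bil M1 u u) (bil M1 v u + bil M1 u v) (bil M1 v v)
          (bil M2 u u) (bil M2 v u + bil M2 u v) (bil M2 v v).
have step : forall p q s',
    (bil M1 u u) * p + (bil M1 v u + bil M1 u v) * q + (bil M1 v v) * s' = 0 ->
    (bil M2 u u) * p + (bil M2 v u + bil M2 u v) * q + (bil M2 v v) * s' = 0 ->
    0 < (p - s') ^+ 2 + 4 * q ^+ 2 ->
    0 < p + s' + Num.sqrt ((p - s') ^+ 2 + 4 * q ^+ 2) -> Gen X.
  move=> {e1 e2 hnz p q s'} p q s' e1 e2 hd hl.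
  set r0 := Num.sqrt ((p - s') ^+ 2 + 4 * q ^+ 2) in hl.
  have r0ge : 0 <= r0 by apply: sqrtr_ge0.
  have r02 : r0 ^+ 2 = (p - s') ^+ 2 + 4 * q ^+ 2 by rewrite sqr_sqrtr // ltW.
  have r0a : p - s' <= r0 by nra.
  have r0b : s' - p <= r0 by nra.
  set D := Phi u v p q s'.
  have hD1 : mxinner M1 D = 0 by rewrite inner_Phi; lra.
  have hD2 : mxinner M2 D = 0 by rewrite inner_Phi; lra.
  have YG : forall t, 0 <= 1 + t * p -> 0 <= 1 + t * s' ->
      (1 + t * p) * (1 + t * s') = (t * q) ^+ 2 -> Gen (X + t *: D).
    move=> t a0 c0 ac.
    have [w hw] := Phi_rank1 u v a0 c0 ac.
    have -> : X + t *: D = gram (w :: r) by rewrite /X /D Y_id hw gram_cons.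
    apply: IH => //.
    split; first exact: psd_gram.
    rewrite gram_cons -hw -Y_id !innerD !innerZ hD1 hD2 !mulr0 !addr0.
    by split.
  set lp := p + s' + r0.
  have lp0 : lp != 0 by rewrite gt_eqF.
  set t1 := -2 / lp.
  have Y1 : Gen (X + t1 *: D).
    apply: YG; last by apply: (rank1_cond r02); [left|].
      have -> : 1 + t1 * p = (s' - p + r0) / lp by rewrite /t1 /lp; field.
      by apply: divr_ge0; [lra | apply: ltW].
    have -> : 1 + t1 * s' = (p - s' + r0) / lp by rewrite /t1 /lp; field.
    by apply: divr_ge0; [lra | apply: ltW].
  have t1neg : t1 < 0.
    by rewrite /t1 mulNr oppr_lt0 divr_gt0.
  set lm := p + s' - r0.
  case: (ltP lm 0) => hlm.
    have lm0 : lm != 0 by rewrite lt_eqF.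
    set t2 := -2 / lm.
    have t2pos : 0 < t2.
      by rewrite /t2 mulNr oppr_gt0 pmulr_rlt0 // invr_lt0.
    have Y2 : Gen (X + t2 *: D).
      apply: YG; last by apply: (rank1_cond r02); [right|].
        have -> : 1 + t2 * p = (p - s' + r0) / (- lm) by rewrite /t2 /lm; field.
        by apply: divr_ge0; lra.
      have -> : 1 + t2 * s' = (s' - p + r0) / (- lm) by rewrite /t2 /lm; field.
      by apply: divr_ge0; lra.
    set l := t2 / (t2 - t1).
    have hl0 : 0 <= l by apply: divr_ge0; lra.
    have hl1 : 0 <= 1 - l.
      rewrite subr_ge0 /l ler_pdivrMr; lra.
    rewrite -(@comb_id X D l t1 t2); first by apply: GenD; apply: GenZ.
    rewrite /l; field; lra.
  have -> : X = (X + t1 *: D) + (- t1) *: D by rewrite scaleNr addrK.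
  apply: GenD => //; apply: hT; apply: TTZ; first lra.
  split; last by [].
  have hprod : 0 <= lm * lp by apply: mulr_ge0; [exact: hlm | apply: ltW].
  apply: Phi_psd; rewrite /lm /lp in hlm hprod; try lra; nra.
have [[hq hp]|hd] : (q = 0 /\ p = s') \/ 0 < (p - s') ^+ 2 + 4 * q ^+ 2.
  have [hq|hq] := eqVneq q 0.
    have [hp|hp] := eqVneq p s'; first by left.
    right; have : 0 < (p - s') ^+ 2 by rewrite exprn_even_gt0 // subr_eq0.
    nra.
  right; have : 0 < q ^+ 2 by rewrite exprn_even_gt0.
  have := sqr_ge0 (p - s'); nra.
  have p0 : p != 0 by apply/eqP => p0; apply: hnz; rewrite -hp p0 hq.
  have f1 : bil M1 u u + bil M1 v v = 0.
    apply: (mulIf p0); rewrite mul0r; move: e1; rewrite hq -hp; lra.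
  have f2 : bil M2 u u + bil M2 v v = 0.
    apply: (mulIf p0); rewrite mul0r; move: e2; rewrite hq -hp; lra.
  have -> : X = gram [:: u; v] + gram r by rewrite /X -gram_cat.
  apply: GenD.
    apply: hT; split; first exact: psd_gram.
    by rewrite !gram_cons !innerD !inner_rank1 /gram big_nil !inner0 !addr0 f1 f2.
  apply: IH; first exact: ltnW.
  split; first exact: psd_gram.
  by move: hX1 hX2; rewrite /X !inner_gram2 f1 f2 !add0r.
have rpos : 0 < Num.sqrt ((p - s') ^+ 2 + 4 * q ^+ 2) by rewrite sqrtr_gt0.
case: (ltP 0 (p + s' + Num.sqrt ((p - s') ^+ 2 + 4 * q ^+ 2))) => hl.
  exact: step e1 e2 hd hl.
apply: (step (- p) (- q) (- s')).
- lra.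
- lra.
- have -> : (- p - - s') ^+ 2 + 4 * (- q) ^+ 2 = (p - s') ^+ 2 + 4 * q ^+ 2 by ring.
  exact: hd.
- have -> : (- p - - s') ^+ 2 + 4 * (- q) ^+ 2 = (p - s') ^+ 2 + 4 * q ^+ 2 by ring.
  lra.
Qed.

End Main.

Lemma hull_mono (R : realType) (n : nat) (K K' : 'M[R]_n -> Prop) X :
  (forall Y, K Y -> K' Y) -> convex_hull K X -> convex_hull K' X.
Proof.
move=> h [k [lam [Y [h1 [h2 [h3 h4]]]]]].
by exists k, lam, Y; split => //; split => //; split => // i; apply: h.
Qed.

Lemma ROG_equiv (R : realType) (n : nat) (S S' : 'M[R]_n -> Prop) :
  (forall X, S X <-> S' X) -> ROG S' -> ROG S.
Proof.
move=> e h X; split.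
  move=> /e /h; apply: hull_mono => Y [/e ? ?]; by split.
move=> hh; apply/e; apply/h; move: hh; apply: hull_mono => Y [/e ? ?]; by split.
Qed.

Lemma main_equiv (R : realType) (n : nat) (M1 M2 : 'M[R]_n) :
  ROG (SS M1 M2) <-> ROG (TT M1 M2).
Proof.
split => hR X; split.
- move=> hX; have [pX [hX1 hX2]] := hX.
  have [k [lam [Y [hl [hs [hY eX]]]]]] := (hR X).1 (TT_SS hX).
  exists k, lam, (fun i => if lam i == 0 then 0 else Y i).
  split => //; split => //; split.
    move=> i; case: eqP => [_|hi].
      by split; [exact: TT0 | exists 0; rewrite mul0mx].
    have [[pY [hY1 hY2]] hr] := hY i.
    have z : forall M, mxinner M X = 0 -> 0 <= mxinner M (Y i) ->
        (forall j, 0 <= lam j * mxinner M (Y j)) -> mxinner M (Y i) = 0.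
      move=> M hM hi0 hall.
      move: hM; rewrite eX inner_sum.
      under eq_bigr do rewrite innerZ.
      move=> hs0; have := psumr_eq0P (fun j _ => hall j) hs0 (i := i) isT.
      by move/eqP; rewrite mulf_eq0 => /orP [/eqP //|/eqP].
    split => //; split => //; split; apply: z => // j.
      by apply: mulr_ge0 => //; case: (hY j) => -[_ []].
    by apply: mulr_ge0 => //; case: (hY j) => -[_ []].
  rewrite eX; apply: eq_bigr => i _; case: eqP => [->|//].
  by rewrite !scale0r.
- exact: TT_hull.
- move=> hX; apply: hull_of_Gen.
  have [s eX] := chol hX.1.
  rewrite eX; apply: (@main_gen _ _ _ _ _ (size s)) => //.
    by move=> Y hY; apply: Gen_of_hull; apply/hR.
  by rewrite -eX.
- exact: SS_hull.
Qed.

Theorem corollary2p29 (R : realType) (n : nat) (calM : 'M[R]_n -> Prop) :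
  (forall M, calM M -> symmx M) ->
  (exists M1 M2 : 'M[R]_n, M1 <> M2 /\ (forall M, calM M <-> M = M1 \/ M = M2)) ->
  ROG (Scone calM) <-> ROG (Tcone calM).
Proof.
move=> _ [M1 [M2 [_ hM]]].
have eS : forall X, Scone calM X <-> SS M1 M2 X.
  move=> X; split.
    by move=> [pX h]; split => //; split; apply: h; apply/hM; [left|right].
  by move=> [pX [h1 h2]]; split => // M /hM [->|->].
have eT : forall X, Tcone calM X <-> TT M1 M2 X.
  move=> X; split.
    by move=> [pX h]; split => //; split; apply: h; apply/hM; [left|right].
  by move=> [pX [h1 h2]]; split => // M /hM [->|->].
split => h.
  apply: (ROG_equiv eT); apply/main_equiv; apply: (ROG_equiv (S' := Scone calM)) => // X.
  by split => /eS.
apply: (ROG_equiv eS); apply/main_equiv; apply: (ROG_equiv (S' := Tcone calM)) => // X.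
by split => /eT.
Qed.
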